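(* Let $k\geq 2$, $d\geq 2$, let $v_1,\dots,v_k\in\mathbb{R}^d$ be nonzero vectors and $\gamma_1,\dots,\gamma_k>0$ with $\sum_{i=1}^k\gamma_i v_i=0$. Then there exists a bi-partitioning $c_1\dot\cup c_2=\{1,\dots,k\}$ into nonempty sets such that $$\max_{i\in c_1,j\in c_2}\alpha(v_i,v_j)\leq\cos\Big(\frac{\pi}{k-1}\Big).$$
   Context: For nonzero $a,b\in\mathbb{R}^d$, the cosine similarity is $\alpha(a,b)=\frac{\langle a,b\rangle}{\|a\|\|b\|}$. *)

(* Defs.v *)
From mathcomp Require Import all_boot all_order all_algebra.
From mathcomp Require Import all_classical all_reals all_analysis.
Set Implicit Arguments. Unset Strict Implicit. Unset Printing Implicit Defensive.
Import Order.TTheory GRing.Theory Num.Theory.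
Local Open Scope ring_scope.

Definition dotv (R : realType) (d : nat) (a b : 'rV[R]_d) : R :=
  \sum_(l < d) a ord0 l * b ord0 l.
Definition normv (R : realType) (d : nat) (a : 'rV[R]_d) : R :=
  Num.sqrt (dotv a a).
Definition cos_sim (R : realType) (d : nat) (a b : 'rV[R]_d) : R :=
  dotv a b / (normv a * normv b).

(* Main.v *)
Require Import Defs.
From mathcomp Require Import all_boot all_order all_algebra.
From mathcomp Require Import all_classical all_reals all_analysis.
From mathcomp Require Import ring lra zify.
Import Order.TTheory GRing.Theory Num.Theory.
Local Open Scope ring_scope.

Section Vec.
Variables (R : realType) (d : nat).
Implicit Types a b c : 'rV[R]_d.

Lemma dotvC a b : dotv a b = dotv b a.
Proof. by apply: eq_bigr => l _; rewrite mulrC. Qed.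
Lemma dotvDr a b c : dotv a (b + c) = dotv a b + dotv a c.
Proof. rewrite /dotv -big_split; apply: eq_bigr => l _; by rewrite mxE mulrDr. Qed.
Lemma dotvDl a b c : dotv (a + b) c = dotv a c + dotv b c.
Proof. by rewrite dotvC dotvDr !(dotvC c). Qed.
Lemma dotvZr (x : R) a b : dotv a (x *: b) = x * dotv a b.
Proof. rewrite /dotv mulr_sumr; apply: eq_bigr => l _; by rewrite mxE mulrCA. Qed.
Lemma dotvZl (x : R) a b : dotv (x *: a) b = x * dotv a b.
Proof. by rewrite dotvC dotvZr dotvC. Qed.
Lemma dotvNr a b : dotv a (- b) = - dotv a b.
Proof. by rewrite -scaleN1r dotvZr mulN1r. Qed.
Lemma dotvNl a b : dotv (- a) b = - dotv a b.
Proof. by rewrite dotvC dotvNr dotvC. Qed.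
Lemma dotvBr a b c : dotv a (b - c) = dotv a b - dotv a c.
Proof. by rewrite dotvDr dotvNr. Qed.
Lemma dotvBl a b c : dotv (a - b) c = dotv a c - dotv b c.
Proof. by rewrite dotvDl dotvNl. Qed.
Lemma dotv0r a : dotv a 0 = 0.
Proof. rewrite /dotv big1 // => l _; by rewrite mxE mulr0. Qed.
Lemma dotv0l a : dotv 0 a = 0.
Proof. by rewrite dotvC dotv0r. Qed.
Lemma dotv_ge0 a : 0 <= dotv a a.
Proof. apply: sumr_ge0 => l _; by rewrite -expr2 sqr_ge0. Qed.
Lemma dotv_eq0 a : dotv a a = 0 -> a = 0.
Proof.
move=> H; apply/matrixP => i l; rewrite mxE (ord1 i).
have hp : forall m : 'I_d, predT m -> 0 <= a ord0 m * a ord0 m.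
  by move=> m _; rewrite -expr2 sqr_ge0.
have := @psumr_eq0P _ _ _ _ hp H l isT.
by move/eqP; rewrite mulf_eq0 orbb => /eqP ->.
Qed.
Lemma dotv_sumr (k : nat) a (F : 'I_k -> 'rV[R]_d) :
  dotv a (\sum_(i < k) F i) = \sum_(i < k) dotv a (F i).
Proof. exact: (big_morph _ (dotvDr a) (dotv0r a)). Qed.

Lemma dot_bound a b : dotv a a = 1 -> dotv b b = 1 -> -1 <= dotv a b <= 1.
Proof.
move=> ha hb; have h1 := dotv_ge0 (a - b); have h2 := dotv_ge0 (a + b).
rewrite !dotvBl !dotvBr (dotvC b a) ha hb in h1.
rewrite !dotvDl !dotvDr (dotvC b a) ha hb in h2.
apply/andP; split; lra.
Qed.

Lemma tri_core (x y z : 'rV[R]_d) (a b : R) : dotv x x = 1 -> dotv y y = 1 -> dotv z z = 1 ->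
  dotv x y = cos a -> dotv y z = cos b -> 0 <= sin a -> 0 <= sin b ->
  cos (a + b) <= dotv x z.
Proof.
move=> hx hy hz hxy hyz sa sb.
pose x' := x - cos a *: y; pose z' := z - cos b *: y.
have hx' : dotv x' x' = sin a ^+ 2.
  rewrite /x' !dotvBl !dotvBr !dotvZl !dotvZr (dotvC y x) hx hy hxy sin2cos2; ring.
have hz' : dotv z' z' = sin b ^+ 2.
  rewrite /z' !dotvBl !dotvBr !dotvZl !dotvZr (dotvC z y) hz hy hyz sin2cos2; ring.
have hxz : dotv x z = cos a * cos b + dotv x' z'.
  rewrite /x' /z' !dotvBl !dotvBr !dotvZl !dotvZr hy hxy hyz; ring.
have key := dotv_ge0 (sin b *: x' + sin a *: z').
rewrite !dotvDl !dotvDr !dotvZl !dotvZr hx' hz' (dotvC z' x') in key.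
rewrite cosD hxz.
have [sp|s0] := boolP (0 < sin a * sin b).
  set X := dotv x' z' in key *.
  suff : 0 <= sin a * sin b + X by lra.
  have : 0 <= (sin a * sin b) * (sin a * sin b + X) by nra.
  by rewrite pmulr_rge0.
have : sin a * sin b = 0.
  by apply/eqP; rewrite eq_le mulr_ge0 // andbT leNgt.
move/eqP; rewrite mulf_eq0 => /orP [] /eqP hs.
  have -> : x' = 0 by apply: dotv_eq0; rewrite hx' hs expr0n.
  by rewrite dotv0l hs; lra.
have -> : z' = 0 by apply: dotv_eq0; rewrite hz' hs expr0n.
by rewrite dotv0r hs; lra.
Qed.

Lemma slerp (c u : 'rV[R]_d) (phi t : R) : dotv c c = 1 -> dotv u u = 1 ->
  dotv c u = cos phi -> sin phi != 0 ->
  exists c', [/\ dotv c' c' = 1, dotv c' c = cos t & dotv c' u = cos (phi - t)].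
Proof.
move=> hc hu hcu s0.
pose c' := (sin phi)^-1 *: (sin (phi - t) *: c + sin t *: u).
have e1 : dotv c' c = cos t.
  rewrite /c' dotvZl dotvDl !dotvZl hc (dotvC u c) hcu sinB.
  by field.
have e2 : dotv c' u = cos (phi - t).
  rewrite /c' dotvZl dotvDl !dotvZl hu hcu sinB cosB.
  apply: (mulfI s0); rewrite mulrA mulfV // mul1r.
  apply/eqP; rewrite -subr_eq0.
  have E : (sin phi * cos t - cos phi * sin t) * cos phi + sin t * 1 -
    sin phi * (cos phi * cos t + sin phi * sin t) =
    sin t * (1 - (cos phi ^+ 2 + sin phi ^+ 2)) by ring.
  by rewrite E cos2Dsin2 subrr mulr0.
exists c'; split => //.
rewrite {2}/c' dotvZr dotvDr !dotvZr e1 e2.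
apply: (mulfI s0); rewrite mulrA mulfV // mul1r mulr1.
have -> : sin phi = sin (phi - t) * cos t + cos (phi - t) * sin t by rewrite -sinD subrK.
by ring.
Qed.

End Vec.
Arguments dot_bound {R d a b}.
Arguments tri_core {R d x y z a b}.
Arguments slerp {R d c u phi} t.

Section Trig.
Variables (R : realType) (d : nat).

Lemma cos_le_inv (a b : R) : 0 <= a <= pi -> 0 <= b <= pi -> cos b <= cos a -> a <= b.
Proof.
move=> ha hb; rewrite leNgt => H; rewrite leNgt; apply: contra H => H.
by rewrite ltr_cos // in_itv /=.
Qed.

Lemma cos_le (a b : R) : 0 <= a -> a <= b -> b <= pi -> cos b <= cos a.
Proof.
move=> h0 hab hb; rewrite leNgt; apply/negP.
rewrite ltr_cos ?in_itv /=.
- by rewrite ltNge hab.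
- by rewrite hb (le_trans h0 hab).
- by rewrite h0 /= (le_trans hab).
Qed.

Lemma acos_facts (x : R) : -1 <= x <= 1 ->
  [/\ cos (acos x) = x, 0 <= acos x & acos x <= pi].
Proof.
move=> hx; split; [by rewrite acosK // in_itv /= | exact: acos_ge0 | exact: acos_lepi].
Qed.

Lemma tri (x y z : 'rV[R]_d) (a b : R) : dotv x x = 1 -> dotv y y = 1 -> dotv z z = 1 ->
  cos a <= dotv x y -> cos b <= dotv y z -> 0 <= a -> 0 <= b -> a + b <= pi ->
  cos (a + b) <= dotv x z.
Proof.
move=> hx hy hz hxy hyz ha hb hab.
have [c1 g1 l1] := acos_facts _ (dot_bound hx hy).
have [c2 g2 l2] := acos_facts _ (dot_bound hy hz).
have s1 : 0 <= sin (acos (dotv x y)) by apply: sin_ge0_pi; rewrite g1 l1.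
have s2 : 0 <= sin (acos (dotv y z)) by apply: sin_ge0_pi; rewrite g2 l2.
have := tri_core hx hy hz (esym c1) (esym c2) s1 s2.
apply: le_trans.
have e1 : acos (dotv x y) <= a.
  apply: cos_le_inv; first by rewrite g1 l1.
    by rewrite ha /=; lra.
  by rewrite c1.
have e2 : acos (dotv y z) <= b.
  apply: cos_le_inv; first by rewrite g2 l2.
    by rewrite hb /=; lra.
  by rewrite c2.
apply: cos_le => //; [by rewrite addr_ge0 | lra].
Qed.

End Trig.
Arguments tri {R d x y z a b}.
Arguments cos_le {R a b}.
Arguments cos_le_inv {R a b}.
Arguments acos_facts {R x}.

Lemma grow (R : realType) (d k : nat) (u : 'I_k -> 'rV[R]_d) (th : R) :
  (2 <= k)%N -> (forall i, dotv (u i) (u i) = 1) ->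
  0 < th -> th * (k%:R - 1) = pi ->
  (forall S : {set 'I_k}, S != finset.set0 -> ~: S != finset.set0 ->
     exists i j, [/\ i \in S, j \in ~: S & cos th < dotv (u i) (u j)]) ->
  forall n, (n < k)%N -> exists S : {set 'I_k}, exists c : 'rV[R]_d, exists r : R,
    [/\ #|S| = n.+1, dotv c c = 1, 0 <= r,
        (forall j, j \in S -> cos r <= dotv c (u j)) &
        (r *+ 2 <= n%:R * th /\ ((0 < n)%N -> r *+ 2 < n%:R * th))].
Proof.
move=> hk hu th0 thK Hedge; elim=> [|n IH] Hn.
  exists [set Ordinal Hn], (u (Ordinal Hn)), 0; split.
  - by rewrite cards1.
  - exact: hu.
  - exact: lexx.
  - by move=> j /set1P ->; rewrite cos0 hu.
  - by rewrite mul0r mul0rn.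
have [S [c [r [cS hc r0 hS [hr _]]]]] := IH (ltnW Hn).
have S0 : S != finset.set0 by rewrite -cards_eq0 cS.
have Sc0 : ~: S != finset.set0.
  rewrite -cards_eq0; have := cardsC S; rewrite card_ord cS => E.
  apply/eqP => E0; rewrite E0 addn0 in E.
  by move: Hn; rewrite -E ltnn.
have [i [j [iS jS hij]]] := Hedge S S0 Sc0.
have jnS : j \notin S by rewrite inE in jS.
have [ce e0 epi] := acos_facts (dot_bound (hu i) (hu j)).
set e := acos (dotv (u i) (u j)) in ce e0 epi.
have k2 : 2 <= k%:R :> R by rewrite (ler_nat R 2 k).
have thpi : th <= pi by nra.
have eth : e < th.
  have H := @ltr_cos R e th; rewrite !in_itv /= in H.
  rewrite -H ?e0 ?epi ?(ltW th0) ?thpi //.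
  by rewrite ce.
have nk : (n%:R + 2) <= 2 * (k%:R - 1) :> R.
  have : (n.+2)%:R <= k%:R :> R by rewrite ler_nat.
  rewrite -addn2 natrD; lra.
have nk' : (n%:R + 2) * th <= 2 * (k%:R - 1) * th by rewrite ler_wpM2r // ltW.
have pi2 : 2 * (k%:R - 1) * th = 2 * pi by rewrite -thK; ring.
rewrite mulr2n in hr.
have hre : r + e <= pi by nra.
have hcj : cos (r + e) <= dotv c (u j).
  apply: (tri hc (hu i) (hu j) (hS i iS)) => //; by rewrite ce.
have [cp p0 ppi] := acos_facts (dot_bound hc (hu j)).
set phi := acos (dotv c (u j)) in cp p0 ppi.
have hpe : phi <= r + e.
  apply: cos_le_inv; [by rewrite p0 ppi | by rewrite hre addr_ge0 | by rewrite cp].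
case: (lerP phi r) => hpr.
  exists (j |: S), c, r; split => //.
  - by rewrite cardsU1 jnS cS.
  - move=> x /setU1P [-> | xS]; last exact: hS.
    rewrite -cp; apply: cos_le => //; lra.
  - rewrite mulr2n -natr1; split => [|_]; nra.
pose t := (phi - r) / 2.
have sne0 : sin phi != 0.
  by rewrite gt_eqF // sin_gt0_pi //; apply/andP; split; lra.
have [c' [h1 h2 h3]] := slerp t hc (hu j) (esym cp) sne0.
have ht : phi - t = (phi + r) / 2 by rewrite /t; field.
have ht' : t + r = (phi + r) / 2 by rewrite /t; field.
exists (j |: S), c', ((phi + r) / 2); split => //.
- by rewrite cardsU1 jnS cS.
- lra.
- move=> x /setU1P [-> | xS]; first by rewrite h3 ht.
  rewrite -ht'; apply: (tri h1 hc (hu x)) => //.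
  + by rewrite h2.
  + exact: hS.
  + rewrite /t; lra.
  + lra.
- have -> : (phi + r) / 2 *+ 2 = phi + r by rewrite mulr2n; field.
  rewrite -natr1 mulrDl mul1r; split => [|_]; lra.
Qed.

Lemma final (R : realType) (d k : nat) (u : 'I_k -> 'rV[R]_d) (th : R) :
  (2 <= k)%N -> (forall i, dotv (u i) (u i) = 1) ->
  0 < th -> th * (k%:R - 1) = pi ->
  (forall S : {set 'I_k}, S != finset.set0 -> ~: S != finset.set0 ->
     exists i j, [/\ i \in S, j \in ~: S & cos th < dotv (u i) (u j)]) ->
  exists c : 'rV[R]_d, forall j, 0 < dotv c (u j).
Proof.
move=> hk hu th0 thK Hedge.
have k0 : (0 < k)%N by apply: leq_trans hk.
have hk' : (k.-1 < k)%N by rewrite ltn_predL.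
have [S [c [r [cS hc r0 hS [_ hr]]]]] :=
  @grow _ _ _ u th hk hu th0 thK Hedge _ hk'.
exists c => j.
have jS : j \in S.
  apply/negPn/negP => jn.
  have := cardsC S; rewrite card_ord cS prednK // => E.
  have : #|~: S| = 0%N by lia.
  move/eqP; rewrite cards_eq0 => /eqP E0.
  have : j \in ~: S by rewrite finset.in_setC.
  by rewrite E0 inE.
apply: lt_le_trans (hS j jS).
apply: cos_gt0_pihalf.
have hk1 : (k.-1 > 0)%N by rewrite -ltnS prednK.
have := hr hk1; rewrite -subn1 natrB // => h.
rewrite mulr2n in h.
apply/andP; split.
  have := pi_gt0 R; lra.
have : (k%:R - 1) * th = pi by rewrite mulrC.
lra.
Qed.

Theorem lemma3 (R : realType) (k d : nat) (v : 'I_k -> 'rV[R]_d)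
    (gamma : 'I_k -> R) :
  (2 <= k)%N -> (2 <= d)%N ->
  (forall i, v i != 0) ->
  (forall i, 0 < gamma i) ->
  \sum_(i < k) gamma i *: v i = 0 ->
  exists c1 : {set 'I_k},
    [/\ c1 != finset.set0, ~: c1 != finset.set0 &
        forall i j, i \in c1 -> j \in ~: c1 ->
          cos_sim (v i) (v j) <= cos (pi / (k%:R - 1))].
Proof.
move=> hk hd hv hg hsum.
case: (pselect (exists c1 : {set 'I_k},
    [/\ c1 != finset.set0, ~: c1 != finset.set0 &
        forall i j, i \in c1 -> j \in ~: c1 ->
          cos_sim (v i) (v j) <= cos (pi / (k%:R - 1))])) => // Hno.
exfalso.
have dpos : forall i, 0 < dotv (v i) (v i).
  move=> i; rewrite lt_neqAle dotv_ge0 andbT eq_sym.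
  by apply/eqP => /dotv_eq0 /eqP; apply/negP.
pose n i := normv (v i).
have n0 : forall i, 0 < n i by move=> i; rewrite /n /normv sqrtr_gt0.
have nsq : forall i, n i ^+ 2 = dotv (v i) (v i).
  by move=> i; rewrite /n /normv sqr_sqrtr // dotv_ge0.
pose u i := (n i)^-1 *: v i.
have hu : forall i, dotv (u i) (u i) = 1.
  move=> i; rewrite /u dotvZl dotvZr -nsq.
  have := n0 i; move=> /gt_eqF /negbT H; by field.
have hcos : forall i j, cos_sim (v i) (v j) = dotv (u i) (u j).
  move=> i j; rewrite /u /cos_sim dotvZl dotvZr.
  have := n0 i; move=> /gt_eqF /negbT H1.
  have := n0 j; move=> /gt_eqF /negbT H2.
  rewrite /n in H1 H2 *; field; by rewrite H1 H2.
have hvu : forall i, v i = n i *: u i.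
  move=> i; rewrite /u scalerA mulfV ?scale1r //.
  exact/negbT/gt_eqF.
have K0 : 0 < k%:R - 1 :> R.
  have : 2 <= k%:R :> R by rewrite (ler_nat R 2 k).
  lra.
pose th : R := pi / (k%:R - 1).
have th0 : 0 < th by rewrite divr_gt0 // pi_gt0.
have thK : th * (k%:R - 1) = pi by rewrite /th divfK // gt_eqF.
have Hedge : forall S : {set 'I_k}, S != finset.set0 -> ~: S != finset.set0 ->
     exists i j, [/\ i \in S, j \in ~: S & cos th < dotv (u i) (u j)].
  move=> S S0 Sc0; apply: contrapT => Hn; apply: Hno.
  exists S; split => // i j iS jS.
  rewrite leNgt; apply/negP => Hlt; apply: Hn.
  by exists i, j; split => //; rewrite -hcos.
have [c Hc] := @final _ _ _ u th hk hu th0 thK Hedge.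
have : dotv c (\sum_(i < k) gamma i *: v i) = 0 by rewrite hsum dotv0r.
rewrite dotv_sumr.
have hp : forall i : 'I_k, predT i -> 0 <= dotv c (gamma i *: v i).
  move=> i _; rewrite hvu scalerA dotvZr; apply: ltW.
  by rewrite mulr_gt0 // mulr_gt0.
move=> H0.
have k0 : (0 < k)%N by apply: leq_trans hk.
have := @psumr_eq0P _ _ _ _ hp H0 (Ordinal k0) isT.
rewrite hvu scalerA dotvZr => /eqP.
by rewrite gt_eqF // mulr_gt0 // mulr_gt0.
Qed.
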